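(* Let $K:\ell^2\to\mathcal{H}$ be a bounded, linear and injective operator into a real Hilbert space $\mathcal{H}$, $f\in\mathcal{H}$, $w=(w_k)$ with $w_k\ge w_0>0$, $\gamma>0$, and let $\bar u$ be the unique minimizer of $\Psi(u)=\frac12\|Ku-f\|_{\mathcal{H}}^2+\sum_k w_k|u_k|$ over $\ell^2$. For $u\in\ell^2$ let $\mathcal{A}(u)=\{k: |u-\gamma K^*(Ku-f)|_k>\gamma w_k\}$ and $\mathcal{G}(u)=(I-P_{\mathcal{A}(u)})+\gamma P_{\mathcal{A}(u)}K^*K$. Let $k_0\in\mathbb{N}$ and $\rho>0$ be such that $\|u-\bar u\|<\rho$ implies $\mathcal{A}(u)\subset\{1,\dots,k_0\}$. Then $\mathcal{G}(u)^{-1}$ is uniformly bounded on the ball $B_\rho(\bar u)=\{u\in\ell^2:\|u-\bar u\|<\rho\}$, i.e. $\sup_{u\in B_\rho(\bar u)}\|\mathcal{G}(u)^{-1}\|<\infty$.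
   Context: $K^*$ is the Hilbert space adjoint of $K$; $|x|_k$ means $|x_k|$; $P_{\mathcal{B}}$ is the coordinate projection onto the indices in $\mathcal{B}\subset\mathbb{N}$. Each $\mathcal{G}(u)$ is invertible on $\ell^2$. *)

(* Defs.v *)
From HB Require Import structures.
From mathcomp Require Import all_boot all_order all_algebra.
From mathcomp Require Import all_classical all_reals all_analysis.
Set Implicit Arguments. Unset Strict Implicit. Unset Printing Implicit Defensive.
Import Order.TTheory GRing.Theory Num.Theory.
Local Open Scope ring_scope.
Local Open Scope classical_set_scope.

Section Defs.
Variable R : realType.

Definition l2 (u : nat -> R) : Prop :=
  (\sum_(0 <= k <oo) ((u k ^+ 2)%:E) < +oo)%E.
Definition l2norm (u : nat -> R) : R :=
  Num.sqrt (fine (\sum_(0 <= k <oo) ((u k ^+ 2)%:E))).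

Variable H : lmodType R.

Definition inner_product (dot : H -> H -> R) : Prop :=
  [/\ forall x y, dot x y = dot y x,
      forall (a : R) x y z, dot (a *: x + y) z = a * dot x z + dot y z,
      forall x, 0 <= dot x x
    & forall x, dot x x = 0 -> x = 0].

Definition hnorm (dot : H -> H -> R) (x : H) : R := Num.sqrt (dot x x).

Definition hcomplete (dot : H -> H -> R) : Prop :=
  forall s : nat -> H,
    (forall e : R, 0 < e -> exists N, forall m n, (N <= m)%N -> (N <= n)%N ->
        hnorm dot (s m - s n) < e) ->
    exists l : H, forall e : R, 0 < e -> exists N, forall n, (N <= n)%N ->
        hnorm dot (s n - l) < e.

Definition linear_l2 (K : (nat -> R) -> H) : Prop :=
  forall (a : R) u v, l2 u -> l2 v ->
    K (fun k => a * u k + v k) = a *: K u + K v.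
Definition bounded_l2 (dot : H -> H -> R) (K : (nat -> R) -> H) : Prop :=
  exists M : R, forall u, l2 u -> hnorm dot (K u) <= M * l2norm u.
Definition injective_l2 (K : (nat -> R) -> H) : Prop :=
  forall u v, l2 u -> l2 v -> K u = K v -> u = v.

Definition is_adjoint (dot : H -> H -> R) (K : (nat -> R) -> H)
  (Kadj : H -> nat -> R) : Prop :=
  forall h, l2 (Kadj h) /\
    forall v, l2 v -> series (fun k => Kadj h k * v k) @ \oo --> (dot h (K v) : R^o).

Definition Psi (dot : H -> H -> R) (K : (nat -> R) -> H) (f : H)
  (w : nat -> R) (u : nat -> R) : \bar R :=
  ((2^-1 * hnorm dot (K u - f) ^+ 2)%:E
   + \sum_(0 <= k <oo) ((w k * `|u k|)%:E))%E.

Definition active (K : (nat -> R) -> H) (Kadj : H -> nat -> R) (f : H)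
  (w : nat -> R) (gamma : R) (u : nat -> R) (k : nat) : bool :=
  gamma * w k < `| u k - gamma * Kadj (K u - f) k |.

Definition Gop (K : (nat -> R) -> H) (Kadj : H -> nat -> R) (f : H)
  (w : nat -> R) (gamma : R) (u : nat -> R) (x : nat -> R) : nat -> R :=
  fun k => if active K Kadj f w gamma u k then gamma * Kadj (K x) k else x k.

End Defs.

(* Main.v *)
Require Import Defs.
From HB Require Import structures.
From mathcomp Require Import all_boot all_order all_algebra.
From mathcomp Require Import all_classical all_reals all_analysis.
Import Order.TTheory GRing.Theory Num.Theory.
From mathcomp Require Import ring lra.
Local Open Scope ring_scope.
Local Open Scope classical_set_scope.
Section Ser.
Variable R : realType.

Lemma sq_le (a b : R) : `|a| <= `|b| -> a ^+ 2 <= b ^+ 2.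
Proof.
move=> h; rewrite -(real_normK (num_real a)) -(real_normK (num_real b)).
by rewrite !expr2 ler_pM.
Qed.

Lemma fin_series (g : nat -> R) N : (forall k, 0 <= g k) ->
  (\sum_(0 <= k <oo) ((if (k < N)%N then g k else 0)%:E) =
   (\sum_(0 <= k < N) g k)%:E)%E.
Proof.
move=> g0.
rewrite (@nneseries_split _ _ 0 N); last by move=> k _; case: ifP => _; rewrite lee_fin.
rewrite add0n (eseries0 (N:=N)); last by move=> i Ni _; rewrite ltnNge Ni.
rewrite adde0 -sumEFin; apply: eq_big_nat => i /andP[_ iN]; by rewrite iN.
Qed.

Lemma l2_fin (u : nat -> R) N : (forall k, (N <= k)%N -> u k = 0) ->
  l2 u /\ l2norm u = Num.sqrt (\sum_(0 <= k < N) u k ^+ 2).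
Proof.
move=> uN.
have E : (\sum_(0 <= k <oo) ((u k ^+ 2)%:E) = \sum_(0 <= k <oo) ((if (k < N)%N then u k ^+ 2 else 0)%:E))%E.
  apply: eq_eseriesr => k _; case: ifP => // /negbT; rewrite -leqNgt => /uN ->.
  by rewrite expr0n.
split; rewrite /l2 /l2norm E fin_series ?ltry// => k; exact: sqr_ge0.
Qed.

Lemma l2_le (r y : nat -> R) : l2 y -> (forall k, `|r k| <= `|y k|) ->
  l2 r /\ l2norm r <= l2norm y.
Proof.
move=> ly ry.
have le : (\sum_(0 <= k <oo) ((r k ^+ 2)%:E) <= \sum_(0 <= k <oo) ((y k ^+ 2)%:E))%E.
  apply: lee_nneseries => [i _ _|n _]; rewrite lee_fin ?sqr_ge0//.
  exact: sq_le.
have ge0 : (0 <= \sum_(0 <= k <oo) ((r k ^+ 2)%:E))%E.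
  by apply: nneseries_ge0 => n _ _; rewrite lee_fin sqr_ge0.
have lr : l2 r by apply: le_lt_trans ly.
split => //; rewrite /l2norm ler_sqrt; last first.
  by rewrite fine_ge0// (le_trans ge0 le).
apply: fine_le => //; rewrite ge0_fin_numE//; exact: le_trans ge0 le.
Qed.

Lemma coord_le (y : nat -> R) k : l2 y -> `|y k| <= l2norm y.
Proof.
move=> ly.
have ge0 : (0 <= \sum_(0 <= k <oo) ((y k ^+ 2)%:E))%E.
  by apply: nneseries_ge0 => n _ _; rewrite lee_fin sqr_ge0.
have h : ((y k ^+ 2)%:E <= \sum_(0 <= k <oo) ((y k ^+ 2)%:E))%E.
  apply: le_trans (nneseries_lim_ge k.+1 _); last by move=> n _ _; rewrite lee_fin sqr_ge0.
  by rewrite big_nat_recr//= leeDr//; apply: sume_ge0 => i _; rewrite lee_fin sqr_ge0.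
have -> : `|y k| = Num.sqrt (y k ^+ 2) by rewrite sqrtr_sqr.
rewrite /l2norm ler_sqrt; last by rewrite fine_ge0.
rewrite -lee_fin fineK// ge0_fin_numE//.
Qed.
Variable H : lmodType R.
Variable dot : H -> H -> R.
Hypothesis ip : inner_product dot.

Lemma dot_sym x y : dot x y = dot y x.
Proof. by case: ip. Qed.
Lemma dot_lin a x y z : dot (a *: x + y) z = a * dot x z + dot y z.
Proof. by case: ip. Qed.
Lemma dot_lin_r a x y z : dot z (a *: x + y) = a * dot z x + dot z y.
Proof. by rewrite dot_sym dot_lin (dot_sym x) (dot_sym y). Qed.
Lemma dot0l z : dot 0 z = 0.
Proof.
have := dot_lin 1 0 0 z; rewrite scaler0 addr0 mul1r => h.
by apply: (addrI (dot 0 z)); rewrite addr0 -h.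
Qed.
Lemma dot0r z : dot z 0 = 0.
Proof. by rewrite dot_sym dot0l. Qed.
Lemma dotDl x y z : dot (x + y) z = dot x z + dot y z.
Proof. by rewrite -(scale1r x) dot_lin mul1r scale1r. Qed.
Lemma dotZl a x z : dot (a *: x) z = a * dot x z.
Proof. by rewrite -(addr0 (a *: x)) dot_lin dot0l addr0. Qed.
Lemma dotDr x y z : dot z (x + y) = dot z x + dot z y.
Proof. by rewrite dot_sym dotDl !(dot_sym z). Qed.
Lemma dotZr a x z : dot z (a *: x) = a * dot z x.
Proof. by rewrite dot_sym dotZl (dot_sym z). Qed.
Lemma dotNr x z : dot z (- x) = - dot z x.
Proof. by rewrite -scaleN1r dotZr mulN1r. Qed.
Lemma dot_ge0 x : 0 <= dot x x.
Proof. by case: ip. Qed.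
Lemma dot_eq0 x : dot x x = 0 -> x = 0.
Proof. by case: ip => _ _ _; apply. Qed.

Lemma dot_sumL n (c : nat -> R) (v : nat -> H) z :
  dot (\sum_(i < n) c i *: v i) z = \sum_(i < n) c i * dot (v i) z.
Proof.
elim: n => [|n IH]; first by rewrite !big_ord0 dot0l.
by rewrite !big_ord_recr /= dotDl IH dotZl.
Qed.

Lemma hnorm_ge0 x : 0 <= hnorm dot x.
Proof. exact: sqrtr_ge0. Qed.

Lemma CS x y : `|dot x y| <= hnorm dot x * hnorm dot y.
Proof.
have [y0|yn0] := eqVneq (dot y y) 0.
  by rewrite (dot_eq0 _ y0) dot0r normr0 mulr_ge0 ?hnorm_ge0.
have cpos : 0 < dot y y by rewrite lt_def yn0 dot_ge0.
set t := dot x y / dot y y.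
have := dot_ge0 ((- t) *: y + x).
rewrite dot_lin !dot_lin_r [dot y x]dot_sym => h.
have key : dot x y ^+ 2 <= dot x x * dot y y.
  have : 0 <= dot x x - dot x y ^+ 2 / dot y y.
    move: h; rewrite /t.
    have -> : - (dot x y / dot y y) * (- (dot x y / dot y y) * dot y y + dot x y)
      + (- (dot x y / dot y y) * dot x y + dot x x) = dot x x - dot x y ^+ 2 / dot y y.
      by field; rewrite gt_eqF.
    done.
  by rewrite subr_ge0 ler_pdivrMr.
rewrite /hnorm -sqrtrM ?dot_ge0// -(sqrtr_sqr (dot x y)) ler_sqrt//.
by rewrite mulr_ge0 ?dot_ge0.
Qed.
Definition ev (j : nat) : nat -> R := fun k => if k == j then 1 else 0.
Definition vec n (c : nat -> R) : nat -> R := fun k => if (k < n)%N then c k else 0.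

Lemma l2_ev j : l2 (ev j).
Proof. apply: (proj1 (@l2_fin _ j.+1 _)) => k; rewrite /ev; case: eqP => // ->; by rewrite ltnn. Qed.
Lemma l2_vec n c : l2 (vec n c).
Proof. apply: (proj1 (@l2_fin _ n _)) => k; rewrite /vec leqNgt; by case: ltnP. Qed.
Lemma l2_0 : l2 (fun _ : nat => (0 : R)).
Proof. by apply: (proj1 (@l2_fin _ 0 _)). Qed.

Variable K : (nat -> R) -> H.
Hypothesis linK : linear_l2 K.

Lemma K0 : K (fun _ => 0) = 0.
Proof.
have := @linK 1 (fun _ => 0) (fun _ => 0) l2_0 l2_0.
have -> : (fun k : nat => 1 * (0:R) + 0) = (fun _ => 0) by apply/funext => k; rewrite mul1r addr0.
rewrite scale1r => h; by apply: (addrI (K (fun _ => 0))); rewrite addr0 -h.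
Qed.

Lemma Kvec n c : K (vec n c) = \sum_(i < n) c i *: K (ev i).
Proof.
elim: n => [|n IH].
  rewrite big_ord0 -K0; apply: f_equal; apply/funext => k; by rewrite /vec.
rewrite big_ord_recr /= -IH addrC -linK; [|exact: l2_ev|exact: l2_vec].
apply: f_equal; apply/funext => k.
rewrite /vec /ev ltnS leq_eqVlt; case: eqP => [->|_]/=; first by rewrite ltnn mulr1 addr0.
by case: ltnP => _; rewrite mulr0 add0r.
Qed.

Variable Kadj : H -> nat -> R.
Hypothesis adj : is_adjoint dot K Kadj.

Lemma Kadj_coord h k : Kadj h k = dot h (K (ev k)).
Proof.
have [_ /(_ _ (l2_ev k)) c1] := adj h.
have c2 : series (fun i => Kadj h i * ev k i) @ \oo --> (Kadj h k : R^o).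
  apply: (@cvg_near_cst nat R^o); near=> n.
  rewrite seriesEnat /= (bigD1_seq k) ?mem_index_iota ?iota_uniq//=; last first.
    near: n; exists k.+1 => // m.
  rewrite /ev eqxx mulr1 big1 ?addr0// => i /negPf ik; by rewrite ik mulr0.
exact: (cvg_unique (@Rhausdorff R) c2 c1).
Unshelve. all: by end_near.
Qed.
Hypothesis injK : injective_l2 K.

Lemma fin_inv n : exists W, 0 <= W /\
  forall c i, (i < n.+1)%N -> `|c i| <= W * hnorm dot (K (vec n.+1 c)).
Proof.
set N := n.+1.
pose v i := K (ev i).
pose Gm : 'M[R]_N := \matrix_(i, j) dot (v i) (v j).
have dotvec c z : dot (K (vec N c)) z = \sum_(i < N) c i * dot (v i) z.
  by rewrite Kvec (dot_sumL _ c (fun i => K (ev i))).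
have dotvecR c z : dot z (K (vec N c)) = \sum_(i < N) c i * dot z (v i).
  by rewrite dot_sym dotvec; apply: eq_bigr => i _; rewrite dot_sym.
have unit : Gm \in unitmx.
  rewrite unitmxE unitfE; apply/negP => /det0P [a a0 aG].
  pose c k := a 0 (inord k).
  have hc : forall i : 'I_N, c i = a 0 i by move=> i; rewrite /c inord_val.
  have e0 : dot (K (vec N c)) (K (vec N c)) = 0.
    rewrite dotvec.
    transitivity (\sum_(i < N) c i * (a *m Gm) 0 i).
      apply: eq_bigr => i _; rewrite dotvecR !mxE; congr (_ * _).
      by apply: eq_bigr => j _; rewrite !mxE hc dot_sym.
    by rewrite aG big1 // => i _; rewrite mxE mulr0.
  have := dot_eq0 _ e0; rewrite -K0 => /(@injK _ _ (l2_vec N c) l2_0) E.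
  move/eqP: a0; apply; apply/rowP => i.
  have := congr1 (fun f => f (val i)) E; rewrite /vec /= ltn_ord hc => ->.
  by rewrite mxE.
pose B := invmx Gm.
have rec (c : nat -> R) (i : 'I_N) : c i = \sum_(j < N) B i j * dot (v j) (K (vec N c)).
  pose cv : 'cV[R]_N := \col_l c l.
  have : cv = B *m (Gm *m cv) by rewrite mulmxA mulVmx // mul1mx.
  move/(congr1 (fun M : 'cV[R]_N => M i 0)); rewrite !mxE => ->.
  apply: eq_bigr => j _; rewrite !mxE dotvecR; congr (_ * _).
  by apply: eq_bigr => l _; rewrite !mxE mulrC.
exists (\sum_(i < N) \sum_(j < N) `|B i j| * hnorm dot (v j)).
split.
  by apply: sumr_ge0 => i _; apply: sumr_ge0 => j _; rewrite mulr_ge0 ?hnorm_ge0.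
move=> c i Hi.
pose io := Ordinal Hi.
have -> : c i = c io by [].
rewrite (rec c io).
apply: le_trans (ler_norm_sum _ _ _) _.
apply: (@le_trans _ _ (\sum_(j < N) `|B io j| * hnorm dot (v j) * hnorm dot (K (vec N c)))).
  apply: ler_sum => j _; rewrite normrM -mulrA ler_wpM2l//; exact: CS.
rewrite -mulr_suml ler_wpM2r ?hnorm_ge0//.
rewrite [X in _ <= X](bigD1 io) //= lerDl; apply: sumr_ge0 => i0 _.
by apply: sumr_ge0 => j _; rewrite mulr_ge0 ?hnorm_ge0.
Qed.
End Ser.
Arguments vec {R}. Arguments ev {R}.

Lemma term_le_sum (R : realType) (F : nat -> R) N i : (forall k, 0 <= F k) -> (i < N)%N ->
  F i <= \sum_(0 <= k < N) F k.
Proof.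
move=> F0 iN; rewrite big_mkord (bigD1 (Ordinal iN)) //= lerDl.
by apply: sumr_ge0 => j _.
Qed.

Lemma l2_bound (R : realType) (z g : nat -> R) N (T : R) : l2 g -> 0 <= T ->
  (forall k, z k ^+ 2 <= g k ^+ 2 + (if (k < N)%N then T else 0)) ->
  l2 z /\ fine (\sum_(0 <= k <oo) ((z k ^+ 2)%:E))%E
       <= fine (\sum_(0 <= k <oo) ((g k ^+ 2)%:E))%E + N%:R * T.
Proof.
move=> lg T0 hz.
have g0 : (0 <= \sum_(0 <= k <oo) ((g k ^+ 2)%:E))%E.
  by apply: nneseries_ge0 => n _ _; rewrite lee_fin sqr_ge0.
have z0 : (0 <= \sum_(0 <= k <oo) ((z k ^+ 2)%:E))%E.
  by apply: nneseries_ge0 => n _ _; rewrite lee_fin sqr_ge0.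
have gfin : (\sum_(0 <= k <oo) ((g k ^+ 2)%:E))%E \is a fin_num by rewrite ge0_fin_numE.
have le : (\sum_(0 <= k <oo) ((z k ^+ 2)%:E) <=
   (fine (\sum_(0 <= k <oo) ((g k ^+ 2)%:E)) + N%:R * T)%:E)%E.
  apply: (@le_trans _ _ (\sum_(0 <= k <oo) ((g k ^+ 2)%:E + (if (k < N)%N then T else 0)%:E))%E).
    apply: lee_nneseries => [i _ _|k _]; first by rewrite lee_fin sqr_ge0.
    by rewrite -EFinD lee_fin.
  rewrite nneseriesD; last 2 first.
  - by move=> i _ _; rewrite lee_fin sqr_ge0.
  - by move=> i _ _; case: ifP; rewrite lee_fin.
  rewrite fin_series; last by move=> _.
  by rewrite EFinD fineK// sumr_const_nat subn0 mulr_natl.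
have zfin : (\sum_(0 <= k <oo) ((z k ^+ 2)%:E))%E \is a fin_num.
  by rewrite ge0_fin_numE// (le_lt_trans le) ?ltry.
split; first by rewrite /l2 -ge0_fin_numE.
by rewrite -lee_fin fineK.
Qed.

Theorem corollary3p12 (R : realType) (H : lmodType R) (dot : H -> H -> R)
  (K : (nat -> R) -> H) (Kadj : H -> nat -> R) (f : H) (w : nat -> R)
  (w0 gamma : R) (ubar : nat -> R) (k0 : nat) (rho : R) :
  inner_product dot -> hcomplete dot ->
  linear_l2 K -> bounded_l2 dot K -> injective_l2 K -> is_adjoint dot K Kadj ->
  0 < w0 -> (forall k, w0 <= w k) -> 0 < gamma ->
  l2 ubar -> (forall u, l2 u -> (Psi dot K f w ubar <= Psi dot K f w u)%E) ->
  0 < rho ->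
  (forall u, l2 u -> l2norm (fun k => u k - ubar k) < rho ->
     forall k, active K Kadj f w gamma u k -> (k < k0)%N) ->
  (* standing fact from the context: each G(u) is invertible on l^2 *)
  (forall u, l2 u -> forall y, l2 y ->
     exists x, [/\ l2 x, Gop K Kadj f w gamma u x = y &
       forall x', l2 x' -> Gop K Kadj f w gamma u x' = y -> x' = x]) ->
  exists C : R, forall u, l2 u -> l2norm (fun k => u k - ubar k) < rho ->
    forall x, l2 x -> l2norm x <= C * l2norm (Gop K Kadj f w gamma u x).
Proof.
move=> ip _ linK [M hM] injK adj _ _ hg _ _ _ hact _.
set N := k0.+1.
have [W [W0 hW]] := @fin_inv R H dot ip K linK injK k0.
pose Mp := Num.max M 0.
have Mp0 : 0 <= Mp by rewrite le_max lexx orbT.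
have MMp : M <= Mp by rewrite le_max lexx.
pose E := \sum_(i < N) hnorm dot (K (ev i)).
have E0 : 0 <= E by apply: sumr_ge0 => i _; exact: hnorm_ge0.
pose D := N%:R / gamma + Mp * E.
have D0 : 0 <= D by rewrite addr_ge0 // ?mulr_ge0 // invr_ge0 ltW.
pose B := W * (W * D).
have B0 : 0 <= B by rewrite !mulr_ge0.
exists (Num.sqrt (N%:R * B ^+ 2 + 1)).
move=> u lu hu x lx.
set y := Gop K Kadj f w gamma u x.
have act k : active K Kadj f w gamma u k -> (k < N)%N.
  by move=> /(hact u lu hu k) /ltnW.
pose c k := if active K Kadj f w gamma u k then x k else 0.
pose p := vec N c.
have pE k : p k = c k.
  rewrite /p /vec /c; case: ifP => // /negbT; rewrite -leqNgt => kN.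
  by case: ifP => // /act; rewrite ltnNge kN.
have yE k : y k = if active K Kadj f w gamma u k then gamma * Kadj (K x) k else x k by [].
have ly : l2 y.
  have := @l2_bound R y x N (\sum_(0 <= k < N) y k ^+ 2) lx
    (sumr_ge0 _ (fun i _ => sqr_ge0 (y i))).
  case => // k; case: (boolP (active K Kadj f w gamma u k)) => ak.
    rewrite (act _ ak); apply: ler_wpDl; first exact: sqr_ge0.
    apply: (@term_le_sum R (fun k => y k ^+ 2)) => //; first by move=> j; exact: sqr_ge0.
    exact: act.
  by rewrite yE (negbTE ak) lerDl; case: ifP => // _; apply: sumr_ge0 => i _; exact: sqr_ge0.
set ny := l2norm y.
have ny0 : 0 <= ny by exact: sqrtr_ge0.
pose r := fun k => -1 * p k + x k.
have Kr : K r = -1 *: K p + K x by apply: linK => //; exact: l2_vec.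
have rle k : `|r k| <= `|y k|.
  rewrite /r pE /c yE; case: ifP => _; first by rewrite mulN1r addNr normr0 normr_ge0.
  by rewrite mulr0 add0r.
have [lr rny] := @l2_le R r y ly rle.
have Kp : K p = K x - K r.
  by rewrite Kr scaleN1r opprD opprK addrCA subrr addr0.
set hp := hnorm dot (K p).
have hp0 : 0 <= hp by exact: hnorm_ge0.
have cb i : (i < N)%N -> `|c i| <= W * hp by exact: hW.
have term i : c i * dot (K (ev i)) (K p) <=
    W * hp * (ny / gamma + hnorm dot (K (ev i)) * (Mp * ny)).
  case: (boolP (active K Kadj f w gamma u i)) => ai; last first.
    rewrite /c (negbTE ai) mul0r; apply: mulr_ge0; first exact: mulr_ge0.
    apply: addr_ge0; first by rewrite divr_ge0// ltW.
    by apply: mulr_ge0; [exact: hnorm_ge0|exact: mulr_ge0].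
  apply: le_trans (ler_norm _) _; rewrite normrM; apply: ler_pM => //; first exact: cb (act i ai).
  rewrite Kp (@dotDr R H dot ip) (@dotNr R H dot ip) (@dot_sym R H dot ip _ (K x)).
  rewrite -(@Kadj_coord R H dot K Kadj adj).
  have -> : Kadj (K x) i = y i / gamma by rewrite yE ai /= mulrC mulKf // gt_eqF.
  apply: le_trans (ler_normB _ _) _; apply: lerD.
    rewrite normrM normfV (gtr0_norm hg) ler_wpM2r //; first by rewrite invr_ge0 ltW.
    exact: coord_le.
  apply: le_trans (@CS R H dot ip _ _) _; apply: ler_wpM2l; first exact: hnorm_ge0.
  apply: le_trans (hM r lr) _; apply: (@le_trans _ _ (Mp * l2norm r)).
    by rewrite ler_wpM2r// sqrtr_ge0.
  by rewrite ler_wpM2l.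
have main : dot (K p) (K p) <= W * hp * (ny * D).
  rewrite [X in dot X _](@Kvec R H K linK) (@dot_sumL R H dot ip N c (fun i => K (ev i))).
  apply: (@le_trans _ _ (\sum_(i < N) W * hp * (ny / gamma + hnorm dot (K (ev i)) * (Mp * ny)))).
    by apply: ler_sum => i _; exact: term.
  rewrite -mulr_sumr ler_wpM2l ?mulr_ge0//.
  rewrite big_split /= sumr_const card_ord -mulr_suml -/E.
  rewrite le_eqVlt; apply/orP; left; apply/eqP; rewrite -mulr_natr /D; ring.
have hpb : hp <= W * (ny * D).
  have [->|hpn0] := eqVneq hp 0; first by rewrite !mulr_ge0.
  have hpp : 0 < hp by rewrite lt_def hpn0 hp0.
  rewrite -(ler_pM2l hpp) mulrA [hp * W]mulrC.
  by rewrite -expr2 /hp /hnorm sqr_sqrtr ?dot_ge0 //; exact: (@dot_ge0 R H dot ip).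
have xk k : x k ^+ 2 <= y k ^+ 2 + (if (k < N)%N then (B * ny) ^+ 2 else 0).
  case: (boolP (active K Kadj f w gamma u k)) => ak.
    rewrite (act _ ak); apply: ler_wpDl; first exact: sqr_ge0.
    apply: sq_le; rewrite (ger0_norm (mulr_ge0 B0 ny0)).
    have -> : x k = c k by rewrite /c ak.
    apply: le_trans (cb _ (act _ ak)) _.
    have -> : B * ny = W * (W * (ny * D)) by rewrite /B; ring.
    by rewrite ler_wpM2l.
  by rewrite yE (negbTE ak) lerDl; case: ifP => // _; exact: sqr_ge0.
have [_ fx] := @l2_bound R x y N ((B * ny) ^+ 2) ly (sqr_ge0 _) xk.
rewrite /l2norm; apply: (@le_trans _ _ (Num.sqrt ((N%:R * B ^+ 2 + 1) * ny ^+ 2))).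
  rewrite ler_sqrt; last by rewrite mulr_ge0 ?addr_ge0 ?mulr_ge0 ?sqr_ge0.
  apply: le_trans fx _.
  have -> : fine (\sum_(0 <= k <oo) ((y k ^+ 2)%:E))%E = ny ^+ 2.
    by rewrite /ny /l2norm sqr_sqrtr// fine_ge0// nneseries_ge0// => n _ _; rewrite lee_fin sqr_ge0.
  rewrite le_eqVlt; apply/orP; left; apply/eqP; ring.
rewrite sqrtrM ?addr_ge0 ?mulr_ge0 ?sqr_ge0// sqrtr_sqr ger0_norm//.
Qed.
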